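(* Let $G$ be a group and $H$ a core-free subgroup of $G$. If $H$ has a right transversal $S$ in $G$ which generates $G$ and which is nilpotent with respect to its induced right loop structure, then $H$ is solvable.
   Context: For $H\le G$, a right transversal $S$ contains exactly one element of each right coset $Hg$, with $1\in S$; its induced operation is $x\circ y=$ the unique element of $S\cap Hxy$, making $(S,\circ)$ a right loop (two-sided identity, each equation $X\circ a=b$ uniquely solvable). $H$ is core-free if $\bigcap_{g\in G}g^{-1}Hg=\{1\}$. A congruence on a right loop $S$ is an equivalence relation which is a right subloop of $S\times S$; an invariant right subloop is the class $T$ of $1$ under a congruence, $S/T=\{T\circ x\}$ with $(T\circ x)\circ(T\circ y)=T\circ(x\circ y)$. For congruences $\beta,\gamma$, $\gamma$ centralizes $\beta$ if there is a congruence $(\gamma|\beta)$ on the right loop $\beta\subseteq S\times S$ with: (i) $(x,y)(\gamma|\beta)(u,v)\Rightarrow x\gamma u$; (ii) for $(x,y)\in\beta$, $(u,v)\mapsto u$ is a bijection from the $(\gamma|\beta)$-class of $(x,y)$ to the $\gamma$-class of $x$; (iii) $(x,y)\in\gamma\Rightarrow(x,x)(\gamma|\beta)(y,y)$; (iv) $(x,y)(\gamma|\beta)(u,v)\Rightarrow(y,x)(\gamma|\beta)(v,u)$; (v) $(x,y)(\gamma|\beta)(u,v)$, $(y,z)(\gamma|\beta)(v,w)\Rightarrow(x,z)(\gamma|\beta)(u,w)$. The center $\mathcal Z(S)$ is the class of $1$ under the unique maximal congruence centralized by $S\times S$. $S$ is nilpotent if the series $\mathcal Z_0=\{1\}$,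 $\mathcal Z_1=\mathcal Z(S)$, $\mathcal Z_{i+1}/\mathcal Z_i=\mathcal Z(S/\mathcal Z_i)$ reaches $\mathcal Z_n=S$ for some $n$. *)

(* Defs.v *)
From Stdlib Require Import Arith.

Set Implicit Arguments.

Record Group := {
  gcar :> Type;
  gmul : gcar -> gcar -> gcar;
  ginv : gcar -> gcar;
  gone : gcar;
  gmulA : forall x y z, gmul x (gmul y z) = gmul (gmul x y) z;
  gmul1l : forall x, gmul gone x = x;
  gmulVl : forall x, gmul (ginv x) x = gone
}.

Section GroupNotions.
Variable G : Group.
Local Notation "x * y" := (gmul G x y).
Local Notation "x ^-1" := (ginv G x) (at level 3, format "x ^-1").
Local Notation one := (gone G).

Definition is_subgroup (H : G -> Prop) : Prop :=
  H one /\ (forall x y, H x -> H y -> H (x * y)) /\ (forall x, H x -> H (x^-1)).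

Definition core_free (H : G -> Prop) : Prop :=
  forall x, (forall g, exists h, H h /\ x = g^-1 * h * g) -> x = one.

(* S is a right transversal of H: 1 \in S and S meets each right coset Hg
   in exactly one element (Hg = Hs iff g * s^-1 \in H). *)
Definition right_transversal (H S : G -> Prop) : Prop :=
  S one /\
  forall g, exists s, (S s /\ H (g * s^-1)) /\
    forall s', S s' /\ H (g * s'^-1) -> s' = s.

Inductive gen (P : G -> Prop) : G -> Prop :=
| gen_base x : P x -> gen P x
| gen_one : gen P one
| gen_mul x y : gen P x -> gen P y -> gen P (x * y)
| gen_inv x : gen P x -> gen P (x^-1).

Definition generates (S : G -> Prop) : Prop := forall g, gen S g.

Fixpoint derived (H : G -> Prop) (n : nat) : G -> Prop :=
  match n with
  | 0 => H
  | S n' => gen (fun c => exists a b, derived H n' a /\ derived H n' b /\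
                          c = a^-1 * b^-1 * a * b)
  end.

Definition solvable (H : G -> Prop) : Prop :=
  exists n, forall g, derived H n g -> g = one.

End GroupNotions.

(** For the loop induced on a transversal, [eqv] is
   Leibniz equality; the quotient of a loop by a congruence [R] is the same
   carrier and operation with [eqv := R] (elements of S/T are the classes
   T \o* x, represented by x).  Congruences of S/R are exactly congruences of S
   containing R, which is what [congruence] below expresses. *)
Record RLoop := {
  lcar : Type;
  lop : lcar -> lcar -> lcar;
  lone : lcar;
  leqv : lcar -> lcar -> Prop
}.

Definition quot (L : RLoop) (R : lcar L -> lcar L -> Prop) : RLoop :=
  {| lcar := lcar L; lop := @lop L; lone := lone L; leqv := R |}.

Section LoopNotions.
Variable L : RLoop.
Let A := lcar L.
Local Notation "x \o* y" := (lop L x y) (at level 40, left associativity).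
Local Notation eqv := (@leqv L).

(* A congruence: an equivalence relation (compatible with the loop's
   equality) which is a right subloop of L x L: contains (1,1) (by
   reflexivity), closed under the operation, and closed under right
   division (solutions of X \o* a = b). *)
Definition congruence (R : A -> A -> Prop) : Prop :=
  (forall x, R x x) /\
  (forall x y, R x y -> R y x) /\
  (forall x y z, R x y -> R y z -> R x z) /\
  (forall x y, eqv x y -> R x y) /\
  (forall x y u v, R x y -> R u v -> R (x \o* u) (y \o* v)) /\
  (forall x y a b, R a b -> R (x \o* a) (y \o* b) -> R x y).

Definition pop (p q : A * A) : A * A := (fst p \o* fst q, snd p \o* snd q).

(* A congruence on the right loop beta (a right subloop of L x L, with
   componentwise operation and equality) *)
Definition congruence_on (beta : A -> A -> Prop)
    (D : A * A -> A * A -> Prop) : Prop :=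
  let P := fun p : A * A => beta (fst p) (snd p) in
  (forall p q, D p q -> P p /\ P q) /\
  (forall p, P p -> D p p) /\
  (forall p q, D p q -> D q p) /\
  (forall p q r, D p q -> D q r -> D p r) /\
  (forall p q, P p -> P q -> eqv (fst p) (fst q) -> eqv (snd p) (snd q) -> D p q) /\
  (forall p q p' q', D p q -> D p' q' -> D (pop p p') (pop q q')) /\
  (forall p q a b, P p -> P q -> D a b -> D (pop p a) (pop q b) -> D p q).

Definition centralizes (gamma beta : A -> A -> Prop) : Prop :=
  exists D : A * A -> A * A -> Prop,
    congruence_on beta D /\
    (forall x y u v, D (x, y) (u, v) -> gamma x u) /\
    (* (ii): (u,v) |-> u is a bijection from the D-class of (x,y) onto the
       gamma-class of x (modulo the loop's equality) *)
    (forall x y, beta x y ->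
       (forall u, gamma x u -> exists v, D (x, y) (u, v)) /\
       (forall u v u' v', D (x, y) (u, v) -> D (x, y) (u', v') ->
                          eqv u u' -> eqv v v')) /\
    (forall x y, gamma x y -> D (x, x) (y, y)) /\
    (forall x y u v, D (x, y) (u, v) -> D (y, x) (v, u)) /\
    (forall x y z u v w, D (x, y) (u, v) -> D (y, z) (v, w) -> D (x, z) (u, w)).

Definition total_rel (x y : A) : Prop := True.

(* zeta is the unique maximal congruence centralized by L x L; the center
   Z(L) is its class of 1 *)
Definition is_center_cong (zeta : A -> A -> Prop) : Prop :=
  congruence zeta /\ centralizes total_rel zeta /\
  forall beta, congruence beta -> centralizes total_rel beta ->
    forall x y, beta x y -> zeta x y.

End LoopNotions.

(* Upper central series Z_0 = {1}, Z_{i+1}/Z_i = Z(L/Z_i), expressed through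
   the corresponding congruences z i; L is nilpotent iff Z_n = L for some n *)
Definition nilpotent_loop (L : RLoop) : Prop :=
  exists (n : nat) (z : nat -> lcar L -> lcar L -> Prop),
    (forall x y, z 0 x y <-> leqv L x y) /\
    (forall i, i < n -> is_center_cong (quot L (z i)) (z (S i))) /\
    (forall x, z n (lone L) x).

(* The right loop induced on a right transversal S of H in G, given the
   induced operation circ (x \o* y is the element of S in H x y). *)
Definition induced_op_spec (G : Group) (H S : G -> Prop)
    (circ : {x : G | S x} -> {x : G | S x} -> {x : G | S x}) : Prop :=
  forall x y : {x : G | S x},
    H (gmul G (proj1_sig (circ x y))
              (ginv G (gmul G (proj1_sig x) (proj1_sig y)))).

Definition transversal_loop (G : Group) (S : G -> Prop)
    (circ : {x : G | S x} -> {x : G | S x} -> {x : G | S x})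
    (S1 : S (gone G)) : RLoop :=
  {| lcar := {x : G | S x}; lop := circ; lone := exist _ (gone G) S1;
     leqv := @eq _ |}.

(* Main.v *)
Require Import Defs.
From Stdlib Require Import ProofIrrelevance ClassicalEpsilon Arith Lia.

Lemma gmulV (G : Group) (x : G) : gmul G x (ginv G x) = gone G.
Proof.
  rewrite <- (gmul1l G (gmul G x (ginv G x))).
  rewrite <- (gmulVl G (ginv G x)) at 1.
  rewrite <- gmulA. rewrite (gmulA G (ginv G x)), gmulVl, gmul1l. apply gmulVl.
Qed.

Lemma gmul1r (G : Group) (x : G) : gmul G x (gone G) = x.
Proof. rewrite <- (gmulVl G x), gmulA, gmulV. apply gmul1l. Qed.

Lemma ginvM (G : Group) (x y : G) : ginv G (gmul G x y) = gmul G (ginv G y) (ginv G x).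
Proof.
  rewrite <- (gmul1r G (ginv G (gmul G x y))).
  rewrite <- (gmulV G x) at 1.
  rewrite <- (gmul1l G (ginv G x)) at 1.
  rewrite <- (gmulV G y).
  rewrite !gmulA. rewrite <- (gmulA G _ x y), gmulVl, gmul1l. reflexivity.
Qed.

Lemma ginvK (G : Group) (x : G) : ginv G (ginv G x) = x.
Proof.
  rewrite <- (gmul1r G (ginv G (ginv G x))), <- (gmulVl G x), gmulA, gmulVl. apply gmul1l.
Qed.

Definition LL (G : Group) (S : G -> Prop) (circ : {x : G | S x} -> {x : G | S x} -> {x : G | S x})
  (e : {x : G | S x}) : RLoop :=
  {| lcar := {x : G | S x}; lop := circ; lone := e; leqv := @eq _ |}.

Definition pact (G : Group) (S : G -> Prop) (act : {x : G | S x} -> G -> {x : G | S x})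
  (p : {x : G | S x} * {x : G | S x}) (g : G) := (act (fst p) g, act (snd p) g).

Lemma comm_step (G : Group) (S : G -> Prop)
  (circ : {x : G | S x} -> {x : G | S x} -> {x : G | S x})
  (act : {x : G | S x} -> G -> {x : G | S x}) (e : {x : G | S x})
  (act1 : forall x, act x (gone G) = x)
  (actM : forall x g h, act x (gmul G g h) = act (act x g) h)
  (circA : forall x y, circ x y = act x (proj1_sig y))
  (dive : forall x, act x (ginv G (proj1_sig x)) = e)
  (e1 : forall z, circ e z = z)
  (ce : forall x, circ x e = x)
  (Hgen : generates G S)
  (R Z : {x : G | S x} -> {x : G | S x} -> Prop)
  (Rr : forall x, R x x) (Rs : forall x y, R x y -> R y x)
  (Rt : forall x y z, R x y -> R y z -> R x z)
  (HZ : is_center_cong (quot (LL G S circ e) R) Z)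
  (a b : G) (Ha : forall x, Z x (act x a)) (Hb : forall x, Z x (act x b)) :
  forall x, R x (act x (gmul G (gmul G (gmul G (ginv G a) (ginv G b)) a) b)).
Proof.
  destruct HZ as [HZc [[D [HDc [_ [Hii [Hiii _]]]]] _]].
  destruct HZc as (Zr & Zs & Zt & Ze & Zop & Zdiv).
  destruct HDc as (DP & Drefl & Dsym & Dtrans & Deqv & Dpop & Ddiv).
  cbn in *.
  set (dv := fun x y : {x : G | S x} => act x (ginv G (proj1_sig y))).
  assert (dvK : forall x y, circ (dv x y) y = x).
  { intros x y. unfold dv. rewrite circA, <- actM, gmulVl. apply act1. }
  assert (Zdv : forall x1 x2 y1 y2, Z x1 x2 -> Z y1 y2 -> Z (dv x1 y1) (dv x2 y2)).
  { intros. apply (Zdiv _ _ y1 y2); auto. rewrite !dvK. auto. }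
  set (pp := fun x y z : {x : G | S x} => circ (dv x y) z).
  assert (pK : forall x y, pp x y y = x) by (intros; apply dvK).
  assert (pK2 : forall x z, pp x x z = z).
  { intros. unfold pp, dv. rewrite dive. apply e1. }
  assert (Dp : forall A A' B B' C C', D A A' -> D B B' -> D C C' ->
     D (pp (fst A) (fst B) (fst C), pp (snd A) (snd B) (snd C))
       (pp (fst A') (fst B') (fst C'), pp (snd A') (snd B') (snd C'))).
  { intros A A' B B' C C' hA hB hC.
    assert (hE : D (dv (fst A) (fst B), dv (snd A) (snd B))
                   (dv (fst A') (fst B'), dv (snd A') (snd B'))).
    { destruct (DP _ _ hA) as [PA PA']. destruct (DP _ _ hB) as [PB PB'].
      apply (Ddiv _ _ B B'); cbn; auto.
      unfold pop; cbn. rewrite !dvK. destruct A, A'; exact hA. }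
    exact (Dpop _ _ _ _ hE hC). }
  assert (T1 : forall x y u, Z x y -> D (x, y) (u, pp y x u)).
  { intros x y u hxy.
    pose proof (Dp (x, y) (x, y) (x, x) (x, x) (x, x) (u, u)
                   (Drefl (x, y) hxy) (Drefl (x, x) (Zr x)) (Hiii x u I)) as h.
    cbn in h. rewrite pK2, pK, pK2 in h. exact h. }
  assert (T2 : forall x w y, Z x w -> D (x, w) (y, pp y x w)).
  { intros x w y hxw.
    pose proof (Dp (x, x) (y, y) (x, x) (x, x) (x, w) (x, w)
                   (Hiii x y I) (Drefl (x, x) (Zr x)) (Drefl (x, w) hxw)) as h.
    cbn in h. rewrite pK2, pK2, pK in h. exact h. }
  assert (PA : forall g, gen G S g ->
     (forall P Q, D P Q -> D P (pact G S act Q g)) /\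
     (forall P Q, D P (pact G S act Q g) -> D P Q)).
  { intros g hg. induction hg as [g hs| |g h _ [IH1 IH2] _ [IH3 IH4]|g _ [IH1 IH2]].
    - set (s := exist S g hs : {x : G | S x}).
      assert (hq : forall q, act q g = circ q s) by (intros; rewrite circA; reflexivity).
      split.
      + intros P Q hPQ. pose proof (Dpop P Q (e, e) (s, s) hPQ (Hiii e s I)) as h.
        unfold pop in h; cbn in h. rewrite !ce in h. unfold pact. rewrite !hq.
        destruct P; exact h.
      + intros P Q hPQ. destruct (DP _ _ hPQ) as [hP hQ]. unfold pact in hQ; cbn in hQ.
        rewrite !hq in hQ.
        apply (Ddiv P Q (e, e) (s, s)); [exact hP | apply (Zdiv _ _ s s); auto | exact (Hiii e s I) | ].
        unfold pop; cbn. rewrite !ce. unfold pact in hPQ. rewrite !hq in hPQ.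
        destruct P; exact hPQ.
    - unfold pact; split; intros P Q; rewrite !act1; destruct Q; auto.
    - unfold pact in *; split; intros P Q; rewrite !actM.
      + intros h1. apply (IH3 P (act (fst Q) g, act (snd Q) g)). apply IH1; auto.
      + intros h1. apply IH2. apply (IH4 P (act (fst Q) g, act (snd Q) g)). auto.
    - unfold pact in *; split.
      + intros P Q h1. apply IH2. cbn. rewrite <- !actM, gmulVl, !act1. destruct Q; auto.
      + intros P Q h1. apply IH1 in h1. cbn in h1. rewrite <- !actM, gmulVl, !act1 in h1.
        destruct Q; auto. }
  assert (key : forall x, R (act x (gmul G a b)) (act x (gmul G b a))).
  { intros x.
    set (u := act x a). set (y := act x b).
    assert (hxu : Z x u) by apply Ha. assert (hxy : Z x y) by apply Hb.
    pose proof (proj1 (PA b (Hgen b)) (x, u) (x, u) (Drefl (x,u) hxu)) as h1.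
    unfold pact in h1; cbn in h1. fold y in h1. unfold u in h1. rewrite <- actM in h1.
    pose proof (proj1 (PA a (Hgen a)) (x, y) (x, y) (Drefl (x,y) hxy)) as h2.
    unfold pact in h2; cbn in h2. fold u in h2. unfold y in h2. rewrite <- actM in h2.
    pose proof (T1 x y u hxy) as h3.
    pose proof (T2 x u y hxu) as h4.
    assert (e1' : R (act x (gmul G b a)) (pp y x u)).
    { apply (proj2 (Hii x y hxy) u _ u _); auto. }
    assert (e2' : R (act x (gmul G a b)) (pp y x u)).
    { apply (proj2 (Hii x u hxu) y _ y _); auto. }
    eauto. }
  intros x.
  set (x' := act x (gmul G (ginv G a) (ginv G b))).
  pose proof (key x') as h. unfold x' in h. rewrite <- !actM in h.
  replace (gmul G (gmul G (ginv G a) (ginv G b)) (gmul G b a)) with (gone G) in h.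
  2:{ rewrite <- !gmulA, (gmulA G (ginv G b) b), gmulVl, gmul1l, gmulVl. reflexivity. }
  rewrite act1, !gmulA in h. apply Rs. exact h.
Qed.

Lemma loop_solv (G : Group) (S : G -> Prop)
  (circ : {x : G | S x} -> {x : G | S x} -> {x : G | S x})
  (act : {x : G | S x} -> G -> {x : G | S x}) (e : {x : G | S x})
  (act1 : forall x, act x (gone G) = x)
  (actM : forall x g h, act x (gmul G g h) = act (act x g) h)
  (circA : forall x y, circ x y = act x (proj1_sig y))
  (dive : forall x, act x (ginv G (proj1_sig x)) = e)
  (e1 : forall z, circ e z = z)
  (ce : forall x, circ x e = x)
  (Hgen : generates G S)
  (core : forall g, (forall x, act x g = x) -> g = gone G)
  (Hnil : nilpotent_loop (LL G S circ e)) (K : G -> Prop) : solvable G K.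
Proof.
  destruct Hnil as [n [z [Hz0 [Hzc Hzn]]]].
  assert (Eq : forall i, i <= n ->
    (forall x, z i x x) /\ (forall x y, z i x y -> z i y x) /\
    (forall x y w, z i x y -> z i y w -> z i x w)).
  { intros [|j] hj.
    - cbn in Hz0. repeat split.
      + intros; apply Hz0; reflexivity.
      + intros x y h; apply Hz0 in h; apply Hz0; auto.
      + intros x y w h1 h2; apply Hz0 in h1; apply Hz0 in h2; apply Hz0; congruence.
    - destruct (Hzc j ltac:(lia)) as [(r & s & t & _) _]. auto. }
  set (Tz := fun i g => forall x, z i x (act x g)).
  assert (Tgen : forall i, i <= n -> forall P : G -> Prop, (forall g, P g -> Tz i g) ->
                 forall g, gen G P g -> Tz i g).
  { intros i hi P HP g hg. destruct (Eq i hi) as (r & s & t).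
    induction hg as [g hg| |g h _ IH1 _ IH2|g _ IH].
    - auto.
    - intros x. rewrite act1. apply r.
    - intros x. rewrite actM. eapply t. apply IH1. apply IH2.
    - intros x. apply s. pose proof (IH (act x (ginv G g))) as h.
      rewrite <- actM, gmulVl, act1 in h. exact h. }
  assert (Der : forall k, k <= n -> forall g, derived G K k g -> Tz (n - k) g).
  { induction k as [|k IHk]; intros hk g hg.
    - intros x. replace (n - 0) with n by lia. destruct (Eq n (le_n n)) as (r & s & t).
      apply (t _ (lone (LL G S circ e))); auto.
    - cbn in hg. refine (Tgen (n - Datatypes.S k) ltac:(lia) _ _ g hg).
      clear g hg. intros c [a [b [ha [hb ->]]]].
      pose proof (IHk ltac:(lia) a ha) as Ha. pose proof (IHk ltac:(lia) b hb) as Hb.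
      replace (n - k) with (Datatypes.S (n - Datatypes.S k)) in Ha, Hb by lia.
      destruct (Eq (n - Datatypes.S k) ltac:(lia)) as (r & s & t).
      exact (comm_step G S circ act e act1 actM circA dive e1 ce Hgen _ _ r s t
               (Hzc (n - Datatypes.S k) ltac:(lia)) a b Ha Hb). }
  exists n. intros g hg. apply core. intros x.
  pose proof (Der n (le_n n) g hg x) as h. replace (n - n) with 0 in h by lia.
  apply Hz0 in h. cbn in h. auto.
Qed.

Lemma sig_ext (G : Group) (S : G -> Prop) (a b : {x : G | S x}) :
  proj1_sig a = proj1_sig b -> a = b.
Proof. destruct a, b; cbn; intros ->. f_equal. apply proof_irrelevance. Qed.

Theorem mainTheorem16 (G : Group) (H S : G -> Prop)
  (HsubG : is_subgroup G H) (Hcf : core_free G H)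
  (Htr : right_transversal G H S) (S1 : S (gone G)) (Hgen : generates G S)
  (circ : {x : G | S x} -> {x : G | S x} -> {x : G | S x})
  (Hcirc : induced_op_spec G H S circ)
  (Hnil : nilpotent_loop (transversal_loop G S circ S1)) :
  solvable G H.
Proof.
  destruct HsubG as (H1 & HM & HV).
  set (sim := fun a b => H (gmul G a (ginv G b))).
  assert (simr : forall a, sim a a) by (intros; unfold sim; rewrite gmulV; auto).
  assert (sims : forall a b, sim a b -> sim b a).
  { unfold sim; intros a b h. apply HV in h. rewrite ginvM, ginvK in h. exact h. }
  assert (simt : forall a b c, sim a b -> sim b c -> sim a c).
  { unfold sim; intros a b c h1 h2. pose proof (HM _ _ h1 h2) as h.
    rewrite <- gmulA, (gmulA G (ginv G b)), gmulVl, gmul1l in h. exact h. }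
  assert (simM : forall a b g, sim a b -> sim (gmul G a g) (gmul G b g)).
  { unfold sim; intros a b g h. rewrite ginvM, <- gmulA, (gmulA G g), gmulV, gmul1l. exact h. }
  destruct Htr as [_ Htr].
  assert (Hrep : forall g, {s : {x : G | S x} | sim g (proj1_sig s)}).
  { intros g. destruct (constructive_indefinite_description _ (Htr g)) as [s [[hs h] _]].
    exists (exist _ s hs). exact h. }
  set (rep := fun g => proj1_sig (Hrep g)).
  assert (repS : forall g, sim g (proj1_sig (rep g))) by (intros; exact (proj2_sig (Hrep g))).
  assert (repU : forall g (s : {x : G | S x}), sim g (proj1_sig s) -> rep g = s).
  { intros g s h. apply sig_ext.
    destruct (Htr g) as [t [_ ht]].
    rewrite (ht (proj1_sig (rep g))), (ht (proj1_sig s)); auto.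
    - split; [apply proj2_sig | exact h].
    - split; [apply proj2_sig | apply repS]. }
  set (act := fun (x : {x : G | S x}) g => rep (gmul G (proj1_sig x) g)).
  set (e := exist S (gone G) S1).
  assert (act1 : forall x, act x (gone G) = x).
  { intros x. apply repU. rewrite gmul1r. apply simr. }
  assert (actM : forall x g h, act x (gmul G g h) = act (act x g) h).
  { intros x g h. apply repU. unfold act.
    apply (simt _ (gmul G (proj1_sig (rep (gmul G (proj1_sig x) g))) h)).
    - rewrite gmulA. apply simM. apply repS.
    - apply repS. }
  assert (circA : forall x y, circ x y = act x (proj1_sig y)).
  { intros x y. symmetry. apply repU. apply sims. apply Hcirc. }
  assert (dive : forall x, act x (ginv G (proj1_sig x)) = e).
  { intros x. apply repU. unfold e; cbn. rewrite gmulV. apply simr. }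
  assert (e1 : forall z, circ e z = z).
  { intros z. rewrite circA. apply repU. unfold e; cbn. rewrite gmul1l. apply simr. }
  assert (ce : forall x, circ x e = x).
  { intros x. rewrite circA. apply act1. }
  assert (core : forall g, (forall x, act x g = x) -> g = gone G).
  { intros g hg. apply Hcf. intros g0. exists (gmul G (gmul G g0 g) (ginv G g0)). split.
    - assert (h1 : sim (gmul G g0 g) g0).
      { apply (simt _ (gmul G (proj1_sig (rep g0)) g)).
        - apply simM. apply repS.
        - apply (simt _ (proj1_sig (rep g0))).
          + pose proof (repS (gmul G (proj1_sig (rep g0)) g)) as h.
            change (rep (gmul G (proj1_sig (rep g0)) g)) with (act (rep g0) g) in h.
            rewrite hg in h. exact h.
          + apply sims, repS. }
      exact h1.
    - rewrite !gmulA, gmulVl, gmul1l, <- gmulA, gmulVl, gmul1r. reflexivity. }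
  exact (loop_solv G S circ act e act1 actM circA dive e1 ce Hgen core Hnil H).
Qed.
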